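(* Let $k \geq 5$ be an integer. If $c$ is a rational number such that $\mathcal{G}[\{C_k\}, c]$ is finite and $\mathcal{G}(\{C_k\}, c)^*$ is infinite (that is, $c = c(C_k)$ exists), then \[c \geq \frac{2}{2k+1}.\]
   Context: Graphs are finite and simple; $C_k$ is the cycle on $k$ vertices. For $D \subseteq V(G)$, $N[D]$ is the union of closed neighbourhoods of vertices of $D$. For a set $\mathcal{F}$ of graphs, $D$ is $\mathcal{F}$-isolating if $G - N[D]$ contains no subgraph isomorphic to a member of $\mathcal{F}$, and $\iota(G,\mathcal{F})$ is the minimum size of such a set. Let $\mathcal{G}$ be the set of connected graphs $G$ with $V(G) = [n]$ for some $n \geq 1$. For real $\alpha > 0$, $\mathcal{G}(\mathcal{F},\alpha) = \{G \in \mathcal{G} : \iota(G,\mathcal{F}) \le \lfloor \alpha|V(G)| \rfloor\}$, $\mathcal{G}(\mathcal{F},\alpha)^* = \{G \in \mathcal{G}(\mathcal{F},\alpha) : \iota(G,\mathcal{F}) = \lfloor \alpha |V(G)|\rfloor\}$, and $\mathcal{G}[\mathcal{F},\alpha] = \mathcal{G} \setminus \mathcal{G}(\mathcal{F},\alpha)$. The number $c(\mathcal{F})$, when it exists, is a rational number such that $\mathcal{G}[\mathcal{F},c(\mathcal{F})]$ is finite and $\mathcal{G}(\mathcal{F},c(\mathcal{F}))^*$ is infinite. *)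

(* Defs.v *)
From mathcomp Require Import all_boot all_order all_algebra.
Unset Strict Implicit. Unset Printing Implicit Defensive.
Import Order.TTheory GRing.Theory Num.Theory.

(* A labelled graph on the vertex set 'I_n (standing for [n] = {1,..,n},
   vertex i+1 is coded by i), given by its set of ordered adjacent pairs. *)
Definition graph := {n : nat & {set 'I_n * 'I_n}}.
Definition nverts (G : graph) : nat := tag G.
Definition edges (G : graph) : {set 'I_(nverts G) * 'I_(nverts G)} := tagged G.
Definition adj (G : graph) : rel 'I_(nverts G) := fun x y => (x, y) \in edges G.

Definition simple (G : graph) : Prop :=
  forall x y : 'I_(nverts G), adj G x y = adj G y x /\ ~~ adj G x x.
Definition connected (G : graph) : Prop :=
  forall x y : 'I_(nverts G), connect (adj G) x y.

Definition in_calG (G : graph) : Prop :=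
  (0 < nverts G)%N /\ simple G /\ connected G.

Definition closed_nbhd (G : graph) (D : {set 'I_(nverts G)}) : {set 'I_(nverts G)} :=
  [set v | (v \in D) || [exists u in D, adj G u v]].

(* G - X contains a subgraph isomorphic to C_k (k >= 3): an injective map
   f : Z_k -> V(G) \ X with f i ~ f (i+1 mod k) *)
Definition has_Ck_outside (G : graph) (k : nat) (X : {set 'I_(nverts G)}) : bool :=
  [exists f : {ffun 'I_k -> 'I_(nverts G)},
     injectiveb f && [forall i : 'I_k, (f i \notin X) && adj G (f i) (f (ordS i))]].

Definition Ck_isolating (G : graph) (k : nat) (D : {set 'I_(nverts G)}) : bool :=
  ~~ has_Ck_outside G k (closed_nbhd G D).

(* iota(G, {C_k}): minimum size of a {C_k}-isolating set
   (V(G) itself is always isolating, so the default n is never smaller) *)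
Definition iota_Ck (G : graph) (k : nat) : nat :=
  \big[minn/nverts G]_(D : {set 'I_(nverts G)} | Ck_isolating G k D) #|D|.

Definition floor_an (a : rat) (G : graph) : int :=
  Num.floor (a * (nverts G)%:R).

Definition calG_le (k : nat) (a : rat) (G : graph) : Prop :=
  in_calG G /\ (Posz (iota_Ck G k) <= floor_an a G)%R.
Definition calG_star (k : nat) (a : rat) (G : graph) : Prop :=
  calG_le k a G /\ Posz (iota_Ck G k) = floor_an a G.
(* \mathcal{G}[{C_k}, a] = \mathcal{G} \ \mathcal{G}({C_k}, a) *)
Definition calG_gt (k : nat) (a : rat) (G : graph) : Prop :=
  in_calG G /\ ~ calG_le k a G.

Definition finite_graphs (P : graph -> Prop) : Prop :=
  exists s : seq graph, forall G, P G -> G \in s.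

(* Main.v *)
Require Import Defs.
From mathcomp Require Import all_boot all_order all_algebra.
From mathcomp Require Import zify lra.
Import Order.TTheory GRing.Theory Num.Theory.

Definition near (M p q : nat) : bool :=
  [|| q == (p + 1) %% M, q == (p + 2) %% M, p == (q + 1) %% M | p == (q + 2) %% M].

Definition inner (k p q : nat) : bool :=
  [&& p < 2 * k, q < 2 * k & near (2 * k) p q] || ((p == 0) && (q == 2 * k))
  || ((p == 2 * k) && (q == 0)).

Definition adjn (k a b : nat) : bool :=
  [&& a == 0, 0 < b & (b - 1) %% (2 * k + 1) == 2 * k]
  || [&& b == 0, 0 < a & (a - 1) %% (2 * k + 1) == 2 * k]
  || [&& 0 < a, 0 < b, (a - 1) %/ (2 * k + 1) == (b - 1) %/ (2 * k + 1)
        & inner k ((a - 1) %% (2 * k + 1)) ((b - 1) %% (2 * k + 1))].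

Definition Gm (k m : nat) : graph :=
  existT (fun n => {set 'I_n * 'I_n}) (m * (2 * k + 1)).+1
    [set e : 'I_(m * (2 * k + 1)).+1 * 'I_(m * (2 * k + 1)).+1 | adjn k e.1 e.2].

Lemma adjGm k m (x y : 'I_(nverts (Gm k m))) : adj (Gm k m) x y = adjn k x y.
Proof. by rewrite /adj /edges /= inE. Qed.

Lemma modD_neq v a b M : a < M -> b < M -> a != b -> (v + a) %% M != (v + b) %% M.
Proof.
move=> aM bM ab; apply/negP => /eqP h.
have : (v + a == v + b %[mod M]) by rewrite h.
by rewrite eqn_modDl !modn_small // (negbTE ab).
Qed.

Lemma near_sym M p q : near M p q = near M q p.
Proof. rewrite /near; by case: (q == _); case: (q == _); case: (p == _); case: (p == _). Qed.

Lemma near_irr M p : 2 < M -> p < M -> ~~ near M p p.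
Proof.
move=> M2 pM; rewrite /near.
have h1 : p != (p + 1) %% M by rewrite -{1}(modn_small pM) -{1}(addn0 p) modD_neq //; lia.
have h2 : p != (p + 2) %% M by rewrite -{1}(modn_small pM) -{1}(addn0 p) modD_neq //; lia.
by rewrite (negbTE h1) (negbTE h2).
Qed.

Lemma near_shift M b c c' : 
  (c' == c + 1) || (c' == c + 2) || (c == c' + 1) || (c == c' + 2) ->
  near M ((b + c) %% M) ((b + c') %% M).
Proof.
rewrite /near !modnDml -!addnA.
by case/orP=> [/orP[/orP[]|]|] /eqP-> ; rewrite ?eqxx ?orbT.
Qed.


Lemma inner_sym k p q : inner k p q = inner k q p.
Proof.
rewrite /inner near_sym.
by case: (p < _); case: (q < _); case: (near _ _ _); case: (p == _); case: (q == _);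
  case: (p == _); case: (q == _).
Qed.

Lemma adjn_sym k a b : adjn k a b = adjn k b a.
Proof.
rewrite /adjn inner_sym [(a - 1) %/ _ == _]eq_sym.
by rewrite [X in X || _]orbC; case: (0 < a); case: (0 < b).
Qed.

Lemma adjn_irr k a : 1 < k -> ~~ adjn k a a.
Proof.
move=> k0; rewrite /adjn.
case: (posnP a) => [->|a0] //=.
rewrite eqxx /= /inner.
have pl : (a - 1) %% (2 * k + 1) < 2 * k + 1 by rewrite ltn_mod; lia.
case: (ltnP ((a - 1) %% (2 * k + 1)) (2 * k)) => h.
  have n2 : 2 < 2 * k by lia.
  rewrite (negbTE (@near_irr _ _ n2 h)) /=.
  apply/negP => /orP[] /andP[/eqP h1 /eqP h2]; lia.
rewrite /=; apply/negP => /orP[] /andP[/eqP h1 /eqP h2]; lia.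
Qed.

Lemma simpleGm k m : 1 < k -> simple (Gm k m).
Proof. by move=> k0 x y; rewrite !adjGm adjn_sym adjn_irr. Qed.

Definition vtx k m u j : 'I_(m * (2 * k + 1)).+1 := inord (1 + u * (2 * k + 1) + j).

Lemma vtxE k m u j : u < m -> j < 2 * k + 1 -> (vtx k m u j : nat) = 1 + u * (2 * k + 1) + j.
Proof.
move=> um jB; rewrite /vtx inordK //.
have : u.+1 * (2 * k + 1) <= m * (2 * k + 1) by rewrite leq_mul2r um orbT.
rewrite mulSn; lia.
Qed.

Lemma divE k u j : j < 2 * k + 1 -> (1 + u * (2 * k + 1) + j - 1) %/ (2 * k + 1) = u.
Proof. by move=> jB; rewrite -addnA add1n subn1 /= divnMDl ?divn_small ?addn0 //; lia. Qed.

Lemma modE k u j : j < 2 * k + 1 -> (1 + u * (2 * k + 1) + j - 1) %% (2 * k + 1) = j.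
Proof. by move=> jB; rewrite -addnA add1n subn1 /= modnMDl modn_small. Qed.

Lemma vtx_dec k m (x : 'I_(m * (2 * k + 1)).+1) : 0 < x ->
  x = vtx k m ((x - 1) %/ (2 * k + 1)) ((x - 1) %% (2 * k + 1)).
Proof.
move=> x0; apply: ord_inj.
have xl := ltn_ord x.
rewrite vtxE.
- by rewrite -addnA -divn_eq; lia.
- rewrite ltn_divLR; lia.
- rewrite ltn_mod; lia.
Qed.

Lemma connectedGm k m : 0 < k -> connected (Gm k m).
Proof.
move=> k0.
have hub : forall x : 'I_(nverts (Gm k m)), connect (adj (Gm k m)) ord0 x.
  move=> x; case: (posnP x) => [x0|x0].
    by have -> : x = ord0 by apply: val_inj.
  rewrite (@vtx_dec k m x x0).
  set u := (x - 1) %/ _; set j := (x - 1) %% _.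
  have xl : x < (m * (2 * k + 1)).+1 := ltn_ord x.
  have um : u < m by rewrite ltn_divLR; lia.
  have jB : j < 2 * k + 1 by rewrite ltn_mod; lia.
  have hz : connect (adj (Gm k m)) ord0 (vtx k m u (2 * k)).
    apply: connect1; rewrite adjGm /adjn /= vtxE //; last lia.
    by rewrite modE ?eqxx //=; lia.
  have h0 : connect (adj (Gm k m)) ord0 (vtx k m u 0).
    apply: (connect_trans hz); apply: connect1; rewrite adjGm /adjn !vtxE //; try lia.
    rewrite !divE ?modE //; try lia.
    by apply/orP; right; rewrite !eqxx /= /inner !eqxx !orbT.
  case: (ltnP j (2 * k)) => jl; last by have -> : j = 2 * k by lia.
  clearbody u j; elim: j jB jl {x0} => [//|j IH] jB jl.
  apply: (connect_trans (IH _ _)); try lia.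
  apply: connect1; rewrite adjGm /adjn !vtxE //; try lia.
  rewrite !divE ?modE //; try lia.
  rewrite eqxx /= /inner /near (modn_small (m := j + 1)); last lia.
  rewrite addn1 eqxx /=; have -> : j < 2 * k by lia.
  by rewrite jl.
have sym : connect_sym (adj (Gm k m)).
  by apply: sym_connect_sym => x y; rewrite !adjGm adjn_sym.
move=> x y; apply: (connect_trans (y := ord0)); last exact: hub.
by rewrite sym; apply: hub.
Qed.


Definition cyc (k i : nat) : nat := if 2 * i < k then 2 * i else 2 * (k - i) - 1.

Lemma cyc_lt k i : i < k -> cyc k i < k.
Proof. rewrite /cyc; case: ifP => /= h; lia. Qed.

Lemma cyc_inj k i j : i < k -> j < k -> cyc k i = cyc k j -> i = j.
Proof. rewrite /cyc; case: ifP => /= h1; case: ifP => /= h2; lia. Qed.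

Lemma cyc_step k i : 2 < k -> i < k ->
  let c := cyc k i in let c' := cyc k ((i.+1) %% k) in
  (c' == c + 1) || (c' == c + 2) || (c == c' + 1) || (c == c' + 2).
Proof.
move=> k2 ik /=.
case: (ltnP i.+1 k) => h.
  rewrite (modn_small h) /cyc.
  case: ifP => /= h1; case: ifP => /= h2; apply/orP; 
  first (by left; apply/orP; left; apply/orP; right; apply/eqP; lia);
  first (by left; apply/orP; right; apply/eqP; lia);
  first (by lia);
  by right; apply/eqP; lia.
have ek : i.+1 = k by lia.
rewrite ek.
rewrite modnn /cyc /=.
by case: ifP => h1; case: ifP => h2; apply/orP; left; apply/orP; right; apply/eqP; lia.
Qed.

Lemma not_near k v a : 4 < k -> v < 2 * k -> 3 <= a <= k + 2 ->
  ~~ near (2 * k) v ((v + a) %% (2 * k)) /\ (v + a) %% (2 * k) != v.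
Proof.
move=> k4 vk ha.
have h0 : (v + a) %% (2 * k) != (v + 0) %% (2 * k) by apply: modD_neq; clear - k4 vk ha; lia.
have h1 : (v + a) %% (2 * k) != (v + 1) %% (2 * k) by apply: modD_neq; clear - k4 vk ha; lia.
have h2 : (v + a) %% (2 * k) != (v + 2) %% (2 * k) by apply: modD_neq; clear - k4 vk ha; lia.
have h3 : (v + 0) %% (2 * k) != (v + (a + 1)) %% (2 * k) by apply: modD_neq; clear - k4 vk ha; lia.
have h4 : (v + 0) %% (2 * k) != (v + (a + 2)) %% (2 * k) by apply: modD_neq; clear - k4 vk ha; lia.
have vE : (v + 0) %% (2 * k) = v by rewrite addn0 modn_small.
rewrite vE in h0 h3 h4; split => //.
rewrite /near !modnDml -!addnA.
by rewrite (negbTE h1) (negbTE h2) (negbTE h3) (negbTE h4).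
Qed.


Lemma unit_lb k m (D : {set 'I_(nverts (Gm k m))}) u :
  4 < k -> u < m -> Ck_isolating (Gm k m) k D ->
  1 < #|[set x in D | (0 < (x : nat)) && (((x : nat) - 1) %/ (2 * k + 1) == u)]|.
Proof.
move=> k4 um iso.
set S := [set x in D | _].
rewrite ltnNge; apply/negP => S1.
move/negP: iso; apply.
have [v vk HS] : exists2 v, v < 2 * k & forall x, x \in S ->
    (((x : nat) - 1) %% (2 * k + 1) == v) || ((((x : nat) - 1) %% (2 * k + 1) == 2 * k) && (v == 0)).
  case: (set_0Vmem S) => [S0 | [y yS]].
    exists 0; first by clear -k4; lia.
    by move=> x; rewrite S0 inE.
  have yB : ((y : nat) - 1) %% (2 * k + 1) < 2 * k + 1 by rewrite ltn_mod; clear -k4; lia.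
  exists (if ((y : nat) - 1) %% (2 * k + 1) < 2 * k then ((y : nat) - 1) %% (2 * k + 1) else 0).
    by case: ifP => //; clear -k4; lia.
  move=> x xS; have -> : x = y := card_le1_eqP S1 y x yS xS.
  move: yB; case: ifP => h yB; first by rewrite eqxx.
  apply/orP; right; rewrite eqxx andbT.
  move: (((y : nat) - 1) %% (2 * k + 1)) h yB => r h yB.
  by apply/eqP; clear -h yB; lia.
pose q := fun i : 'I_k => (v + (3 + cyc k i)) %% (2 * k).
have qlt : forall i, q i < 2 * k by move=> i; rewrite /q ltn_mod; clear -k4; lia.
have qn : forall i, ~~ near (2 * k) v (q i) /\ q i != v.
  move=> i; apply: not_near => //.
  have := @cyc_lt k i (ltn_ord i); clear -k4; lia.
pose f := [ffun i : 'I_k => vtx k m u (q i)].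
have qB : forall i, q i < 2 * k + 1 by move=> i; rewrite addn1 ltnS ltnW.
have fE : forall i, (f i : nat) = 1 + u * (2 * k + 1) + q i.
  by move=> i; rewrite ffunE vtxE.
have fdiv : forall i, ((f i : nat) - 1) %/ (2 * k + 1) = u by move=> i; rewrite fE divE.
have fmod : forall i, ((f i : nat) - 1) %% (2 * k + 1) = q i by move=> i; rewrite fE modE.
have fpos : forall i, 0 < (f i : nat) by move=> i; rewrite fE.
apply/existsP; exists f; apply/andP; split.
  apply/injectiveP => i j /(congr1 (@nat_of_ord _)); rewrite !fE => /eqP.
  rewrite eqn_add2l => /eqP eqq.
  apply: ord_inj; apply: (@cyc_inj k i j (ltn_ord i) (ltn_ord j)).
  move: eqq; apply: contra_eq => ne; apply: modD_neq; last by rewrite eqn_add2l.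
    by have := @cyc_lt k i (ltn_ord i); clear -k4; lia.
  by have := @cyc_lt k j (ltn_ord j); clear -k4; lia.
apply/forallP => i; apply/andP; split.
  rewrite /closed_nbhd inE negb_or; apply/andP; split.
    apply/negP => fD.
    have : f i \in S by rewrite inE fD fpos fdiv eqxx.
    move/HS; rewrite fmod; case/orP => [/eqP e | /andP[/eqP e _]].
      by move: (qn i).2; rewrite e eqxx.
    by have := qlt i; rewrite e ltnn.
  apply/existsP => -[x /andP[xD]]; rewrite adjGm /adjn.
  case/orP => [/orP[|]|].
  - by case/and3P => _ _; rewrite fmod => /eqP e; have := qlt i; rewrite e ltnn.
  - by case/and3P => /eqP f0; have := fpos i; rewrite f0.
  - case/and4P => x0 _; rewrite fdiv => xu.
    have xS : x \in S by rewrite inE xD x0 xu.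
    rewrite fmod; case/orP: (HS x xS) => [/eqP -> | /andP[/eqP -> /eqP v0]].
      by rewrite /inner (negbTE (qn i).1) !andbF /= (ltn_eqF vk) (ltn_eqF (qlt i)) !andbF.
    rewrite /inner ltnn /=.
    have k0 : (2 * k == 0) = false by apply/negbTE; clear -k4; lia.
    by rewrite k0 /= eqxx /= => /eqP qi0; move: (qn i).2; rewrite qi0 v0.
rewrite /adj /edges /= inE /adjn; apply/orP; right; rewrite !fpos !fdiv eqxx !fmod /=.
rewrite /inner !qlt /=; apply/orP; left; apply/orP; left.
rewrite /q !addnA; apply: near_shift; apply: cyc_step => //; clear -k4; lia.
Qed.


Lemma card_sep (T : finType) (D : {set T}) (P : pred T) :
  #|[set x in D | P x]| = \sum_(x in D) (P x : nat).
Proof.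
rewrite -sum1_card big_mkcond /= [RHS]big_mkcond /=; apply: eq_bigr => x _.
by rewrite inE; case: (x \in D); case: (P x).
Qed.

Lemma sum_eq_ord a m : \sum_(u < m) ((a == (u : nat)) : nat) = (a < m).
Proof.
elim: m => [|m IH]; first by rewrite big_ord0.
rewrite big_ord_recr /= IH ltnS.
by case: ltngtP.
Qed.

Lemma iota_lb k m : 4 < k -> 2 * m <= iota_Ck (Gm k m) k.
Proof.
move=> k4; rewrite /iota_Ck; apply: (big_ind (fun x => 2 * m <= x)).
- rewrite /=; nia.
- by move=> x y hx hy; rewrite leq_min hx hy.
move=> D iso.
pose S := fun u : 'I_m => [set x in D | (0 < (x : nat)) && (((x : nat) - 1) %/ (2 * k + 1) == u)].
have h1 : \sum_(u < m) 2 <= \sum_(u < m) #|S u|.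
  by apply: leq_sum => u _; apply: unit_lb.
rewrite sum_nat_const card_ord mulnC in h1.
apply: (leq_trans h1).
rewrite /S.
under eq_bigr => u _ do rewrite card_sep.
rewrite exchange_big /= -sum1_card.
apply: leq_sum => x _.
case: (0 < (x : nat)) => /=; last by rewrite big1.
by rewrite sum_eq_ord; case: (_ < m).
Qed.


Theorem proposition2 (k : nat) (c : rat) :
  (5 <= k)%N -> (0 < c)%R ->
  finite_graphs (calG_gt k c) ->
  ~ finite_graphs (calG_star k c) ->
  (2%:R / (2 * k + 1)%:R <= c)%R.
Proof.
move=> k5 c0 [s hs] _.
rewrite leNgt; apply/negP => hc.
have Bpos : (0 < (2 * k + 1)%:R :> rat)%R by rewrite ltr0n addn1.
rewrite ltr_pdivlMr // in hc.
pose d := (2 - c * (2 * k + 1)%:R)%R.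
have d0 : (0 < d)%R by rewrite /d subr_gt0.
have hN := @archi_boundP _ (c / d) (ltW (divr_gt0 c0 d0)).
set N := Num.Def.archi_bound _ in hN.
rewrite ltr_pdivrMr // in hN.
pose Mx := \max_(G <- s) nverts G.
pose m := (N + Mx).+1.
have hG : calG_gt k c (Gm k m).
  split.
    split; first by [].
    split; [apply: simpleGm | apply: connectedGm]; lia.
  move=> [_ hle].
  have hi := @iota_lb k m k5.
  have hf : ((floor_an c (Gm k m))%:~R <= c * (nverts (Gm k m))%:R :> rat)%R by apply: floor_le.
  have hlt : (c * (nverts (Gm k m))%:R < (2 * m)%:R :> rat)%R.
    rewrite /= -addn1 natrD natrM !natrM.
    have hm : ((N%:R : rat) + 1 <= m%:R)%R by rewrite /m -addn1 natrD lerD2r ler_nat leq_addr.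
    move: hc hN hm d0 c0; rewrite /d natrD natrM.
    move: (c) (k%:R : rat) (N%:R : rat) (m%:R : rat) => c' K N' M' h1 h2 h3 h4 h5.
    nra.
  have : ((floor_an c (Gm k m)) < Posz (2 * m))%R.
    by rewrite -(ltr_int rat); apply: (le_lt_trans hf).
  move: hle; rewrite leNgt => /negP H1 H2; apply: H1.
  by apply: (lt_le_trans H2); rewrite lez_nat.
have Gs := hs _ hG.
have := @leq_bigmax_seq _ s xpredT nverts _ Gs isT.
rewrite -/Mx /= => h.
have : m <= m * (2 * k + 1) by rewrite leq_pmulr // addn1.
rewrite /m in h *; clear -h; lia.
Qed.
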